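(* Suppose a unitary $C$ is written in the form $$C=H_{\mathbf a}P_{\mathbf d}Z_{\mathbf D}\,\mathbf H\,e^{\mathrm{i}\phi}X_{\mathbf u}Z_{\mathbf v}P_{\mathbf b}Z_{\mathbf B}X_{\mathbf A}$$ with $\mathbf a,\mathbf d,\mathbf u,\mathbf v,\mathbf b\in\mathbb F_2^n$, $\mathbf D,\mathbf B\in\mathcal B_n$, $\mathbf A\in GL_n(\mathbb F_2)$ and $\phi\in\{k\pi/4:k\in\mathbb Z\}$. Then for every $i\in\{0,\dots,n-1\}$, the product $H_iC$ can also be written in this form (with possibly different data $\mathbf a,\mathbf d,\mathbf D,\phi,\mathbf u,\mathbf v,\mathbf b,\mathbf B,\mathbf A$ of the same types).
   Context: Qubits are labelled $0,\dots,n-1$; computational basis $\{|x\rangle:x\in\mathbb F_2^n\}$; $\mathrm{i}=\sqrt{-1}$. One-qubit gates $\mathtt H=\frac1{\sqrt2}\begin{pmatrix}1&1\\1&-1\end{pmatrix}$, $\mathtt P=\mathrm{diag}(1,\mathrm{i})$, $\mathtt Z=\mathrm{diag}(1,-1)$, $\mathtt X=\begin{pmatrix}0&1\\1&0\end{pmatrix}$; $U_i$ denotes the gate $\mathtt U$ acting on qubit $i$, and $U_{\mathbf a}=\prod_iU_i^{a_i}$ for $\mathbf a\in\mathbb F_2^n$. $\mathbf H=\prod_{i=0}^{n-1}H_i$. For $\mathbf A\in GL_n(\mathbb F_2)$, $X_{\mathbf A}|x\rangle=|\mathbf Ax\rangle$. $\mathcal B_n$ is the set of symmetric $n\times n$ matrices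 over $\mathbb F_2$ with zero diagonal, and for $\mathbf B\in\mathcal B_n$, $Z_{\mathbf B}|x\rangle=(-1)^{\sum_{i<j}b_{ij}x_ix_j}|x\rangle$. *)

(* Defs.v *)
(* Complex scalars: algC (algebraic complex numbers), which
   contain 1/sqrt 2, 'i and e^{i pi/4} = (1 + 'i)/sqrt 2. *)
From HB Require Import structures.
From mathcomp Require Import all_boot all_order all_algebra all_field.
Set Implicit Arguments. Unset Strict Implicit. Unset Printing Implicit Defensive.
Import Order.TTheory GRing.Theory Num.Theory.
Local Open Scope ring_scope.

(* Computational basis labels: vectors x in F_2^n (column vectors). *)
Definition bits (n : nat) := 'cV['F_2]_n.

(* Dimension of the Hilbert space: #|F_2^n| (= 2^n); operators are square
   complex matrices indexed by the enumeration of the basis labels. *)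
Definition dim (n : nat) := #|{: bits n}|.
Definition op (n : nat) := 'M[algC]_(dim n).

Definition mx_of n (f : bits n -> bits n -> algC) : op n :=
  \matrix_(r, c) f (enum_val r) (enum_val c).

Definition b2o (t : 'F_2) : 'I_2 := inord (nat_of_ord t).

Definition gate_on n (i : 'I_n) (U : 'M[algC]_2) : op n :=
  mx_of (fun x y : bits n =>
    if [forall j : 'I_n, (j != i) ==> (x j ord0 == y j ord0)]
    then U (b2o (x i ord0)) (b2o (y i ord0)) else 0).

Definition Hm : 'M[algC]_2 :=
  \matrix_(r, c) ((sqrtC 2)^-1 * (if (r == 1 :> nat) && (c == 1 :> nat) then -1 else 1)).
Definition Pm : 'M[algC]_2 := \matrix_(r, c) (if r == c then (if r == 1 :> nat then 'i else 1) else 0).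
Definition Zm : 'M[algC]_2 := \matrix_(r, c) (if r == c then (if r == 1 :> nat then -1 else 1) else 0).
Definition Xm : 'M[algC]_2 := \matrix_(r, c) (if r == c then 0 else 1).

Definition Hg n (i : 'I_n) := gate_on i Hm.
Definition Pg n (i : 'I_n) := gate_on i Pm.
Definition Zg n (i : 'I_n) := gate_on i Zm.
Definition Xg n (i : 'I_n) := gate_on i Xm.

Definition gate_vec n (G : 'I_n -> op n) (a : bits n) : op n :=
  \big[mulmx/1%:M]_(i < n) (if a i ord0 == 1 then G i else 1%:M).

Definition Hall n : op n := \big[mulmx/1%:M]_(i < n) Hg i.

Definition XA n (A : 'M['F_2]_n) : op n :=
  mx_of (fun x y : bits n => if x == A *m y then 1 else 0).

Definition isB n (B : 'M['F_2]_n) : Prop := B^T = B /\ forall i, B i i = 0.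

Definition sgnF2 (t : 'F_2) : algC := if t == 0 then 1 else -1.

Definition ZB n (B : 'M['F_2]_n) : op n :=
  mx_of (fun x y : bits n =>
    if x == y then sgnF2 (\sum_(i < n) \sum_(j < n | (i < j)%N) B i j * x i ord0 * x j ord0)
    else 0).

(* e^{i k pi/4} = ((1 + i)/sqrt 2)^k, k in Z *)
Definition w8 : algC := (1 + 'i) / sqrtC 2.
Definition phase n (k : int) : op n := (w8 ^ k) *: 1%:M.

Definition normal_form n (a d : bits n) (D : 'M['F_2]_n) (k : int)
  (u v b : bits n) (B A : 'M['F_2]_n) : op n :=
  gate_vec (@Hg n) a *m gate_vec (@Pg n) d *m ZB D *m Hall n *m phase n k
  *m gate_vec (@Xg n) u *m gate_vec (@Zg n) v *m gate_vec (@Pg n) b *m ZB B *m XA A.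

(* Main.v *)
Require Import Defs.
From mathcomp Require Import all_boot all_order all_algebra all_field.
Import GRing.Theory Num.Theory.
Set Implicit Arguments. Unset Strict Implicit. Unset Printing Implicit Defensive.
Local Open Scope ring_scope.

Lemma mulmx_of n (f g : bits n -> bits n -> algC) :
  mx_of f *m mx_of g = mx_of (fun x y => \sum_z f x z * g z y).
Proof.
apply/matrixP=> r c; rewrite !mxE.
rewrite (reindex (@enum_val _ (mem {: bits n}))) /=; last first.
  by apply: onW_bij; exact: enum_val_bij.
by apply: eq_bigr => s _; rewrite !mxE.
Qed.

Lemma eq_mx_of n (f g : bits n -> bits n -> algC) :
  (forall x y, f x y = g x y) -> mx_of f = mx_of g.
Proof. by move=> H; apply/matrixP=> r c; rewrite !mxE H. Qed.

Lemma id_mx_of n : (1%:M : op n) = mx_of (fun x y => (x == y)%:R).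
Proof.
apply/matrixP=> r c; rewrite !mxE.
by rewrite (inj_eq enum_val_inj).
Qed.

Lemma F2_cases (t : 'F_2) : t = 0 \/ t = 1.
Proof. by case: t => [[|[|m]] //= Hm]; [left|right]; apply: val_inj. Qed.

Lemma b2o0 : b2o 0 = 0. Proof. by apply: val_inj; rewrite /b2o /= inordK. Qed.
Lemma b2o1 : b2o 1 = 1. Proof. by apply: val_inj; rewrite /b2o /= inordK. Qed.
Lemma F2_10 : (1 : 'F_2) != 0. Proof. by []. Qed.
Lemma F2_11 : (1 + 1 : 'F_2) = 0. Proof. by apply: val_inj. Qed.

Definition agree n (i : 'I_n) (x z : bits n) :=
  [forall k : 'I_n, (k != i) ==> (x k ord0 == z k ord0)].
Definition agree2 n (i j : 'I_n) (x z : bits n) :=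
  [forall k : 'I_n, (k != i) && (k != j) ==> (x k ord0 == z k ord0)].
Definition upd n (x : bits n) (i : 'I_n) (t : 'F_2) : bits n :=
  \col_k (if k == i then t else x k ord0).

Lemma upd_at n (x : bits n) i t : upd x i t i ord0 = t.
Proof. by rewrite mxE eqxx. Qed.
Lemma upd_off n (x : bits n) i t k : k != i -> upd x i t k ord0 = x k ord0.
Proof. by rewrite mxE => /negbTE ->. Qed.

Lemma agree_upd n (x : bits n) i t : agree i x (upd x i t).
Proof. by apply/forallP => k; apply/implyP => H; rewrite upd_off. Qed.

Lemma agree_updl n (x y : bits n) i t : agree i (upd x i t) y = agree i x y.
Proof. by apply: eq_forallb => k; case H: (k != i) => //=; rewrite upd_off. Qed.

Lemma agree_eq n (x y : bits n) i : agree i x y -> x i ord0 = y i ord0 -> x = y.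
Proof.
move=> /forallP H E; apply/matrixP => k l; rewrite (ord1 l).
case: (eqVneq k i) => [->|Hk] //.
by move: (H k); rewrite Hk => /eqP.
Qed.

Lemma sum_upd n i (x : bits n) (f : bits n -> algC) :
  (forall z, ~~ agree i x z -> f z = 0) ->
  \sum_z f z = f (upd x i 0) + f (upd x i 1).
Proof.
move=> Hf.
have ne : upd x i 1 != upd x i 0.
  by apply/eqP => /matrixP /(_ i ord0); rewrite !upd_at.
rewrite (bigD1 (upd x i 0)) //= (bigD1 (upd x i 1)) //= big1 ?addr0 //.
move=> z /andP [n1 n0]; apply: Hf; apply/negP => Ag.
have Ez : z = upd x i (z i ord0).
  apply/matrixP => k l; rewrite (ord1 l) mxE.
  case: (eqVneq k i) => [->|Hk] //.
  by move/forallP: Ag => /(_ k); rewrite Hk => /eqP ->.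
by case: (F2_cases (z i ord0)) Ez => -> Ez; [move: n1|move: n0]; rewrite -Ez eqxx.
Qed.

Lemma gate_same n (i : 'I_n) U V :
  gate_on i U *m gate_on i V = gate_on i (U *m V).
Proof.
rewrite /gate_on mulmx_of; apply: eq_mx_of => x y.
rewrite (@sum_upd _ i x); last first.
  by move=> z Hz; rewrite -/(agree i x z) (negbTE Hz) mul0r.
rewrite -!/(agree _ _ _) !agree_upd !agree_updl !upd_at mxE big_ord_recr big_ord_recr big_ord0 b2o0 b2o1.
have e0 : widen_ord (leqnSn 1) ord_max = 0 :> 'I_2 by apply: val_inj.
have e1 : ord_max = 1 :> 'I_2 by apply: val_inj.
by rewrite e0 e1; case: (agree i x y); rewrite /= ?mulr0 ?addr0 ?add0r.
Qed.

Lemma agree_upd2 n (x y : bits n) i j t : i != j ->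
  agree j (upd x i t) y = (t == y i ord0) && agree2 i j x y.
Proof.
move=> ij; apply/idP/idP.
- move/forallP=> H; apply/andP; split.
    by move: (H i); rewrite ij upd_at.
  apply/forallP => k; apply/implyP => /andP [ki kj].
  by move: (H k); rewrite kj upd_off.
- case/andP => /eqP -> /forallP H; apply/forallP => k; apply/implyP => kj.
  case: (eqVneq k i) => [->|ki]; first by rewrite upd_at.
  by rewrite upd_off //; move: (H k); rewrite ki kj.
Qed.

Lemma gate_diff n (i j : 'I_n) U V : i != j ->
  gate_on i U *m gate_on j V =
  mx_of (fun x y => if agree2 i j x y then
     U (b2o (x i ord0)) (b2o (y i ord0)) * V (b2o (x j ord0)) (b2o (y j ord0)) else 0).
Proof.
move=> ij; rewrite /gate_on mulmx_of; apply: eq_mx_of => x y.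
rewrite (@sum_upd _ i x); last first.
  by move=> z Hz; rewrite -/(agree i x z) (negbTE Hz) mul0r.
rewrite -!/(agree _ _ _) !agree_upd !agree_upd2 // !upd_at !upd_off 1?eq_sym //.
case: (agree2 i j x y); rewrite ?andbF ?andbT ?mulr0 ?addr0 //.
by case: (F2_cases (y i ord0)) => ->; rewrite eqxx ?F2_10 ?(negbTE F2_10) 1?eq_sym ?(negbTE F2_10) ?mulr0 ?add0r ?addr0 ?b2o0 ?b2o1.
Qed.

Lemma gate_comm n (i j : 'I_n) U V : i != j ->
  gate_on i U *m gate_on j V = gate_on j V *m gate_on i U.
Proof.
move=> ij.
rewrite (gate_diff _ _ ij) (gate_diff _ _ (contra_neq (@esym _ _ _) ij)); apply: eq_mx_of => x y.
have -> : agree2 j i x y = agree2 i j x y.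
  by apply: eq_forallb => k; rewrite andbC.
by rewrite mulrC.
Qed.

Lemma gate1 n (i : 'I_n) : gate_on i 1%:M = 1%:M.
Proof.
rewrite id_mx_of /gate_on; apply: eq_mx_of => x y.
case: (eqVneq x y) => [<-|xy].
  by rewrite mxE eqxx; case: forallP => // -[] k; rewrite eqxx implybT.
rewrite -/(agree i x y); case Ag: (agree i x y) => //; rewrite mxE.
have : b2o (x i ord0) != b2o (y i ord0).
  apply: contraNneq xy => E; apply/eqP; apply: (agree_eq Ag).
  by move: E; case: (F2_cases (x i ord0)) => ->; case: (F2_cases (y i ord0)) => ->; rewrite ?b2o0 ?b2o1.
by move/negbTE => ->.
Qed.

Lemma HmHm : Hm *m Hm = 1%:M.
Proof.
have s2 : (sqrtC 2)^-1 * (sqrtC 2)^-1 = 2^-1 :> algC by rewrite -invfM -expr2 sqrtCK.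
have h2 : 2^-1 + 2^-1 = 1 :> algC.
  by rewrite -mulr2n -[_ *+ 2]mulr_natr mulVf // pnatr_eq0.
have e0 : widen_ord (leqnSn 1) ord_max = 0 :> 'I_2 by apply: val_inj.
have e1 : ord_max = 1 :> 'I_2 by apply: val_inj.
apply/matrixP => r c; rewrite mxE [RHS]mxE big_ord_recr big_ord_recr big_ord0 /= e0 e1 /= add0r !mxE.
by case: r => [[|[|?]] ?] //; case: c => [[|[|?]] ?] //=;
  rewrite ?(mulr1, mulrN1, mulNr, mulrN, opprK) s2 ?h2 ?subrr ?addrN ?(addrC (- _)) ?subrr.
Qed.

Lemma HgHg n (i : 'I_n) : Hg i *m Hg i = 1%:M.
Proof. by rewrite /Hg gate_same HmHm gate1. Qed.

Definition flip n (a : bits n) (i : 'I_n) : bits n :=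
  \col_k (if k == i then a i ord0 + 1 else a k ord0).

Lemma Hg_gate_vec n (i : 'I_n) (a : bits n) :
  Hg i *m gate_vec (@Hg n) a = gate_vec (@Hg n) (flip a i).
Proof.
rewrite /gate_vec.
set F := fun j : 'I_n => if a j ord0 == 1 then Hg j else 1%:M.
set F' := fun j : 'I_n => if flip a i j ord0 == 1 then Hg j else 1%:M.
have FF : forall j, j != i -> F' j = F j.
  by move=> j ji; rewrite /F /F' mxE (negbTE ji).
have Fi : F' i = Hg i *m F i.
  rewrite /F /F' mxE eqxx.
  case: (F2_cases (a i ord0)) => ->; rewrite ?add0r eqxx ?mulmx1 //.
  by rewrite F2_11 (_ : ((0 : 'F_2) == 1) = false) // HgHg.
have Fc : forall j, j != i -> Hg i *m F j = F j *m Hg i.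
  move=> j ji; rewrite /F; case: ifP => _; last by rewrite mulmx1 mul1mx.
  by rewrite /Hg gate_comm // eq_sym.
have gen : forall r : seq 'I_n, uniq r ->
  (i \in r -> Hg i *m \big[mulmx/1%:M]_(j <- r) F j = \big[mulmx/1%:M]_(j <- r) F' j) /\
  (i \notin r -> \big[mulmx/1%:M]_(j <- r) F j = \big[mulmx/1%:M]_(j <- r) F' j).
  elim=> [|j r IH] /=; first by rewrite !big_nil.
  case/andP => jr ur; have [IH1 IH2] := IH ur.
  rewrite !big_cons in_cons; split.
    case: (eqVneq i j) => [E _|ij /= ir].
      by rewrite -E mulmxA -Fi IH2 // E.
    by rewrite mulmxA Fc 1?eq_sym // -mulmxA IH1 // FF // eq_sym.
  rewrite negb_or => /andP [ij ir].
  by rewrite IH2 // FF // eq_sym.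
by apply: (gen _ (index_enum_uniq _)).1; rewrite mem_index_enum.
Qed.

Theorem lemma4p1 (n : nat) (C : op n)
  (a d u v b : bits n) (D B A : 'M['F_2]_n) (k : int) :
  isB D -> isB B -> A \in unitmx ->
  C = normal_form a d D k u v b B A ->
  forall i : 'I_n,
  exists (a' d' u' v' b' : bits n) (D' B' A' : 'M['F_2]_n) (k' : int),
    [/\ isB D', isB B', A' \in unitmx &
        Hg i *m C = normal_form a' d' D' k' u' v' b' B' A'].
Proof.
move=> HD HB HA -> i.
exists (flip a i), d, u, v, b, D, B, A, k; split => //.
by rewrite /normal_form !mulmxA Hg_gate_vec.
Qed.
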